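(* Let $G=(V,A)$, $\mathfrak n=\mathfrak n(G)$ and $\delta$ be as below, with $\delta(e_i)=\sum_{\alpha\in A}\lambda_{i,\alpha}e_i\wedge\alpha+\omega_i$. Let $e_{i_0}\in V$ and $\alpha\in A$. Suppose there are vertices $e_{i_0},e_{i_1},\dots,e_{i_{N-1}}$ and edges $\beta_0,\dots,\beta_{N-1}$ such that $\beta_k$ joins $e_{i_k}$ and $e_{i_{k+1}}$ (indices mod $N$, so $\beta_{N-1}$ joins $e_{i_{N-1}}$ and $e_{i_0}$) and $\beta_k\ne\alpha$ for all $k$. Then $\lambda_{i_0,\alpha}=(-1)^N\lambda_{i_0,\alpha}$; in particular, if $N$ is odd then $\lambda_{i_0,\alpha}=0$.
   Context: $G=(V,A)$ is a finite simple graph without loops and without isolated vertices, $V=\{e_1,\dots,e_n\}$ ordered, each edge joining $e_i,e_j$ ($i<j$) oriented from $e_i$ to $e_j$. $\mathfrak n(G)$ over a field of characteristic zero has basis $V\cup A$, $[e_i,e_j]=\alpha$ if $\alpha$ goes from $e_i$ to $e_j$, $[e_i,e_j]=0$ if not adjacent, edges central; $\mathfrak z=\mathrm{span}(A)$. $\delta$ is a Lie bialgebra structure on $\mathfrak n$ (linear $\delta:\mathfrak n\to\Lambda^2\mathfrak n$ satisfying co-Jacobi and $\delta[x,y]=[\delta x,y]+[x,\delta y]$) with $\delta(\mathfrak z)=0$, such that for every vertex $e_i$ one has $\delta(e_i)=\sum_{\alpha\in A}\lambda_{i,\alpha}e_i\wedge\alpha+\omega_i$ with scalars $\lambda_{i,\alpha}$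 and $\omega_i\in\Lambda^2\mathfrak z$. *)

(* Defs.v *)
From HB Require Import structures.
From mathcomp Require Import all_boot all_order all_algebra.
Set Implicit Arguments. Unset Strict Implicit. Unset Printing Implicit Defensive.
Import GRing.Theory.
Local Open Scope ring_scope.

(* Graph on vertices 'I_n given by a relation adj; an edge is a pair (i,j)
   with i < j and adj i j, oriented from e_i to e_j. *)
Definition edge (n : nat) (adj : rel 'I_n) : Type :=
  {p : 'I_n * 'I_n | (p.1 < p.2)%N && adj p.1 p.2}.
HB.instance Definition _ n adj := Finite.on (@edge n adj).

Definition src n adj (a : @edge n adj) : 'I_n := (val a).1.
Definition tgt n adj (a : @edge n adj) : 'I_n := (val a).2.

Definition basis (n : nat) (adj : rel 'I_n) : Type := ('I_n + @edge n adj)%type.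
HB.instance Definition _ n adj := Finite.on (@basis n adj).

Section LieN.
Variables (F : fieldType) (n : nat) (adj : rel 'I_n).
Local Notation B := (@basis n adj).

(* elements of n(G): coordinate functions on the (finite) basis *)
Definition vec := B -> F.
(* elements of n ⊗ n; Λ²n is the subspace of antisymmetric tensors,
   u ∧ v identified with u ⊗ v - v ⊗ u *)
Definition tens2 := B -> B -> F.

Definition bvec (b : B) : vec := fun b' => (b' == b)%:R.
Definition vadd (x y : vec) : vec := fun b => x b + y b.
Definition vscale (c : F) (x : vec) : vec := fun b => c * x b.

Definition wedge (u v : vec) : tens2 := fun b c => u b * v c - u c * v b.

(* Lie bracket of n(G): [e_i,e_j] = alpha if alpha goes from e_i to e_j,
   0 if not adjacent; edges central. *)
Definition br (x y : vec) : vec := fun b =>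
  match b with
  | inl _ => 0
  | inr a => x (inl (src a)) * y (inl (tgt a)) - x (inl (tgt a)) * y (inl (src a))
  end.

(* adjoint action x . t = (ad_x ⊗ 1 + 1 ⊗ ad_x) t, i.e. [x, u∧v] = [x,u]∧v + u∧[x,v] *)
Definition act (x : vec) (t : tens2) : tens2 := fun b c =>
  \sum_(d : B) t d c * br x (bvec d) b + \sum_(d : B) t b d * br x (bvec d) c.

(* Cycl ∘ (δ ⊗ id) ∘ δ applied to x, as a 3-tensor *)
Definition dd (delta : vec -> tens2) (x : vec) (b c d : B) : F :=
  \sum_(e : B) delta x e d * delta (bvec e) b c.
Definition cojac (delta : vec -> tens2) (x : vec) (b c d : B) : F :=
  dd delta x b c d + dd delta x c d b + dd delta x d b c.

Definition is_lie_bialgebra (delta : vec -> tens2) : Prop :=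
  [/\ (forall (k : F) (x y : vec) b c,
         delta (vadd (vscale k x) y) b c = k * delta x b c + delta y b c),
      (forall x b c, delta x b c = - delta x c b),
      (forall x b c d, cojac delta x b c d = 0) &
      (forall x y b c,
         delta (br x y) b c = act x (delta y) b c - act y (delta x) b c)].

End LieN.

(* Main.v *)
Require Import Defs.
From HB Require Import structures.
From mathcomp Require Import all_boot all_order all_algebra ring.
From Stdlib Require Import FunctionalExtensionality.
Import GRing.Theory.
Local Open Scope ring_scope.

Lemma sum_delta {F : fieldType} {T : finType} (f : T -> F) (e : T) :
  \sum_d f d * (e == d)%:R = f e.
Proof.
rewrite (bigD1 e) //= eqxx mulr1 big1 ?addr0 // => d /negbTE ne.
by rewrite eq_sym ne mulr0.
Qed.

Lemma sum2 {F : fieldType} {T : finType} (f : T -> F) (e1 e2 : T) (X Y : F) :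
  \sum_d f d * (X * (e1 == d)%:R - Y * (e2 == d)%:R) = X * f e1 - Y * f e2.
Proof.
rewrite -(sum_delta f e1) -(sum_delta f e2) !mulr_sumr -sumrB.
by apply: eq_bigr => d _; ring.
Qed.

Lemma br_inl_inr {F : fieldType} {n} {adj : rel 'I_n} (i : 'I_n) (y : vec F adj) (a : edge adj) :
  br (bvec F (inl i)) y (inr a) =
  (src a == i)%:R * y (inl (tgt a)) - (tgt a == i)%:R * y (inl (src a)).
Proof. by []. Qed.

Lemma act_inl {F : fieldType} {n} {adj : rel 'I_n} (i : 'I_n) (t : tens2 F adj) (a a' : edge adj) :
  act (bvec F (inl i)) t (inr a) (inr a') =
  (src a == i)%:R * t (inl (tgt a)) (inr a') - (tgt a == i)%:R * t (inl (src a)) (inr a')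
  + ((src a' == i)%:R * t (inr a) (inl (tgt a')) - (tgt a' == i)%:R * t (inr a) (inl (src a'))).
Proof.
rewrite /act.
under eq_bigr do rewrite br_inl_inr.
under [X in _ + X]eq_bigr do rewrite br_inl_inr.
by rewrite /bvec !sum2.
Qed.

Lemma edge_eq {n} {adj : rel 'I_n} {a b : edge adj} :
  src a = src b -> tgt a = tgt b -> a = b.
Proof.
move=> h1 h2; apply: val_inj; rewrite /src /tgt in h1 h2.
by rewrite [val a]surjective_pairing [val b]surjective_pairing h1 h2.
Qed.

Lemma eq_inl {A B : eqType} (x y : A) : ((inl x : A + B) == inl y) = (x == y).
Proof. by []. Qed.
Lemma eq_inr {A B : eqType} (x y : B) : ((inr x : A + B) == inr y) = (x == y).
Proof. by []. Qed.

Lemma edge_lt {n} {adj : rel 'I_n} (a : edge adj) : (src a < tgt a)%N.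
Proof. case: a => [[x y]] h; rewrite /src /tgt /=; by case/andP: h. Qed.

Theorem mainTheorem16
  (F : fieldType) (charF0 : [pchar F] =i pred0)
  (n : nat) (adj : rel 'I_n)
  (adj_sym : symmetric adj) (adj_irr : irreflexive adj)
  (no_isolated : forall i : 'I_n, exists a : edge adj, i = src a \/ i = tgt a)
  (delta : vec F adj -> tens2 F adj)
  (Hbialg : is_lie_bialgebra delta)
  (Hz : forall (a : edge adj) b c, delta (bvec F (inr a)) b c = 0)
  (lambda : 'I_n -> edge adj -> F)
  (omega : 'I_n -> tens2 F adj)
  (omega_skew : forall i b c, omega i b c = - omega i c b)
  (omega_z : forall i (b c : basis adj),
      omega i b c != 0 -> (if b is inr _ then true else false)
                          && (if c is inr _ then true else false))
  (Hdelta : forall i b c,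
      delta (bvec F (inl i)) b c =
        \sum_(a : edge adj) lambda i a * wedge (bvec F (inl i)) (bvec F (inr a)) b c
        + omega i b c)
  (i0 : 'I_n) (alpha : edge adj) (N : nat) (HN : (0 < N)%N)
  (v : nat -> 'I_n) (beta : nat -> edge adj)
  (Hv0 : v 0%N = i0)
  (Hjoin : forall k, (k < N)%N ->
      (src (beta k) = v k /\ tgt (beta k) = v (k.+1 %% N)%N) \/
      (src (beta k) = v (k.+1 %% N)%N /\ tgt (beta k) = v k))
  (Hne : forall k, (k < N)%N -> beta k <> alpha) :
  lambda i0 alpha = (-1) ^+ N * lambda i0 alpha /\
  (odd N -> lambda i0 alpha = 0).
Proof.
case: Hbialg => _ _ _ Hder.
have om0 : forall k l a, omega k (inl l) (inr a) = 0.
  by move=> k l a; apply/eqP; case: eqP => // /eqP /omega_z.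
have om0' : forall k l a, omega k (inr a) (inl l) = 0.
  by move=> k l a; apply/eqP; case: eqP => // /eqP /omega_z; rewrite andbF.
have dlr : forall k l a, delta (bvec F (inl k)) (inl l) (inr a) = (l == k)%:R * lambda k a.
  move=> k l a; rewrite Hdelta om0 addr0 /wedge /bvec.
  under eq_bigr => d _ do rewrite /= mul0r subr0 mulrCA.
  idtac.
  by rewrite -mulr_sumr sum_delta.
have drl : forall k l a, delta (bvec F (inl k)) (inr a) (inl l) = - ((l == k)%:R * lambda k a).
  move=> k l a; rewrite Hdelta om0' addr0 /wedge /bvec.
  under eq_bigr do rewrite mul0r sub0r mulrN mulrCA.
  by rewrite sumrN -mulr_sumr (eq_bigr (fun d => lambda k d * (a == d)%:R)) ?sum_delta // => d _; rewrite mulrC.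
have key : forall (b g : edge adj), g != b -> lambda (src b) g = - lambda (tgt b) g.
  move=> b g gb.
  have hij := edge_lt b.
  have hbr : br (bvec F (inl (src b))) (bvec F (inl (tgt b))) = bvec F (inr b).
    apply: functional_extensionality => -[x|a] //=.
    rewrite /bvec /=.
    rewrite !eq_inl eq_inr.
    have h0 : (tgt a == src b)%:R * (src a == tgt b)%:R = 0 :> F.
      case: eqP => [e3|]; case: eqP => [e4|]; rewrite ?mul0r ?mulr0 //.
      by move: (edge_lt a); rewrite e3 e4 => /(ltn_trans hij); rewrite ltnn.
    have h1 : (a == b) = (src a == src b) && (tgt a == tgt b).
      by apply/eqP/andP => [->|[/eqP ? /eqP ?]]; [split | apply: edge_eq].
    by rewrite h0 subr0 h1; do 2 case: eqP; rewrite ?mul0r ?mulr0 ?mul1r.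
  have := Hder (bvec F (inl (src b))) (bvec F (inl (tgt b))) (inr b) (inr g).
  rewrite hbr Hz !act_inl !dlr !drl !eqxx /=.
  have ne1 : (src b == tgt b) = false := ltn_eqF hij.
  have ne2 : (tgt b == src b) = false := gtn_eqF hij.
  rewrite ne1 ne2.
  have nb1 : ~ (src g = src b /\ tgt g = tgt b).
    by move=> [h1 h2]; rewrite (edge_eq h1 h2) eqxx in gb.
  have nb2 : ~ (tgt g = src b /\ src g = tgt b).
    move=> [h1 h2].
    by move: (edge_lt g); rewrite h1 h2 => /(ltn_trans hij); rewrite ltnn.
  case: eqP => e1; case: eqP => e2; case: eqP => e3; case: eqP => e4;
    try (exfalso; tauto); move=> /= H; rewrite -[LHS]subr0 H; ring.
have step : forall k, (k < N)%N ->
    lambda (v (k.+1 %% N)%N) alpha = - lambda (v k) alpha.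
  move=> k hk.
  have ab : alpha != beta k by apply/eqP => e; apply: (Hne k hk); rewrite e.
  case: (Hjoin k hk) => [[h1 h2]|[h1 h2]].
  - by have := key _ _ ab; rewrite h1 h2 => ->; rewrite opprK.
  - by have := key _ _ ab; rewrite h1 h2.
have ind : forall k, (k <= N)%N -> lambda (v (k %% N)%N) alpha = (-1) ^+ k * lambda i0 alpha.
  elim => [|k IH] hk; first by rewrite mod0n Hv0 expr0 mul1r.
  have hk' : (k < N)%N by [].
  rewrite (step k hk').
  have := IH (ltnW hk'); rewrite (modn_small hk') => ->.
  by rewrite exprS mulN1r mulNr.
have H := ind N (leqnn N); rewrite modnn Hv0 in H.
split => // Hodd.
have two : (2%:R : F) != 0.
  apply/negP => /eqP h2.
  have : (2 \in [pchar F])%N by apply/andP; split; [by [] | apply/eqP].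
  by rewrite charF0.
have H2 : lambda i0 alpha + lambda i0 alpha = 0.
  rewrite {1}H -signr_odd Hodd expr1 mulN1r; exact: addNr.
move: H2; rewrite -mulr2n -mulr_natr => /eqP; rewrite mulf_eq0 (negbTE two) orbF.
by move/eqP.
Qed.
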